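(* Let $W=\coprod_{a\in\mathcal{A}}W^a$ with the data described below satisfy axioms (A1)–(A3) below, let $\mathcal{F}$, $\mathcal{B}$ be linear maps as described below, and suppose the Jacobi identity hypothesis (J) below holds, with maps $f_\alpha=f^{a_1,a_2,a_3,a_4}_\alpha$, $g_\alpha=g^{a_1,a_2,a_3,a_4}_\alpha$, $h_\alpha=h^{a_1,a_2,a_3,a_4}_\alpha$. Then (locality) for all $a_1,\dots,a_4\in\mathcal{A}$, $w_{(a_i)}\in W^{a_i}$ ($i=1,2,3$), $w'_{(a_4)}\in(W^{a_4})'$, $\mathcal{Z}\in\coprod_{a_5}\mathcal{V}_{a_1a_5}^{a_4}\otimes\mathcal{V}_{a_2a_3}^{a_5}$ and $\alpha\in\mathbb{A}(a_1,a_2,a_3,a_4)$, there exist $n_1,n_2\in\mathbb{N}$ such that $$(x_1-x_2)^{n_1}\langle w'_{(a_4)},f_\alpha(w_{(a_1)},w_{(a_2)},w_{(a_3)},[\mathcal{Z}]_P;x_1,x_2)\rangle=(x_1-x_2)^{n_1}\langle w'_{(a_4)},g_\alpha(w_{(a_1)},w_{(a_2)},w_{(a_3)},\mathcal{B}([\mathcal{Z}]_P);x_1,x_2)\rangle,$$ $$(x_0+x_2)^{n_2}\langle w'_{(a_4)},f_\alpha(w_{(a_1)},w_{(a_2)},w_{(a_3)},[\mathcal{Z}]_P;x_0+x_2,x_2)\rangle=(x_0+x_2)^{n_2}\langle w'_{(a_4)},h_\alpha(w_{(a_1)},w_{(a_2)},w_{(a_3)},\mathcal{F}([\mathcal{Z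}]_P);x_0,x_2)\rangle.$$
   Context: Conventions: standard notions of vertex operator algebras, modules, intertwining operators, $L(n)$, graded duals $W'$. $\log z=\log|z|+i\arg z$, $0\le\arg z<2\pi$. $\delta(x)=\sum_{n\in\mathbb{Z}}x^n$; negative powers of binomials are expanded in nonnegative powers of the second summand (e.g. $f(x_0+x_2,x_2)$ is expanded in nonnegative powers of $x_2$). Data: $W=\coprod_{a\in\mathcal{A}}W^a$, $\mathcal{A}$ finite containing $e$, a vertex operator algebra structure on $W^e$, $W^e$-module structures on all $W^a$, subspaces $\mathcal{V}_{a_1a_2}^{a_3}$ of intertwining operators of type $\binom{W^{a_3}}{W^{a_1}W^{a_2}}$. (A1) $W^e$ adjoint; $\mathcal{V}_{ea}^a$ spanned by the vertex operator of $W^a$; $\mathcal{V}_{ea_1}^{a_2}=0$ if $a_1\ne a_2$. (A2) $L(0)$-eigenvalues on $W^a$ lie in $h_a+\mathbb{Z}$, $h_a\in\mathbb{R}$. (A3) products $\langle w',\mathcal{Y}_1(w_{(a_1)},x_1)\cdots\mathcal{Y}_m(w_{(a_m)},x_m)w\rangle|_{x_i^n=e^{n\log z_i}}$, $\mathcal{Y}_i\in\mathcal{V}_{a_ib_{i+1}}^{b_i}$, converge absolutely on $|z_1|>\cdots>|z_m|>0$ and extend to multivalued analytic functions on $\{z_i\ne0,z_i\ne z_j\}$ with regular-singular-type expansions near $z_i=0,\infty$, $z_i=z_j$; iterates $\langle w',\mathcal{Y}_2(\mathcal{Y}_1(w_{(a_1)},x_0)w_{(a_2)},x_2)w_{(a_3)}\rangle|_{x_0^n=e^{n\log(z_1-z_2)},x_2^n=e^{n\log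 z_2}}$ converge absolutely on $|z_2|>|z_1-z_2|>0$. $\mathbf{P}$: linear map on $\coprod_{a_1..a_5}\mathcal{V}_{a_1a_5}^{a_4}\otimes\mathcal{V}_{a_2a_3}^{a_5}$ with $(\mathbf{P}(\mathcal{Y}_1\otimes\mathcal{Y}_2))(w_{(b_1)},w_{(b_2)},w_{(b_3)};x_1,x_2)=\mathcal{Y}_1(w_{(b_1)},x_1)\mathcal{Y}_2(w_{(b_2)},x_2)w_{(b_3)}$ if $(b_1,b_2,b_3)=(a_1,a_2,a_3)$, else $0$; $\mathbf{I}$: linear map on $\coprod\mathcal{V}_{a_1a_2}^{a_5}\otimes\mathcal{V}_{a_5a_3}^{a_4}$ with $(\mathbf{I}(\mathcal{Y}_1\otimes\mathcal{Y}_2))(w_{(b_1)},w_{(b_2)},w_{(b_3)};x_0,x_2)=\mathcal{Y}_2(\mathcal{Y}_1(w_{(b_1)},x_0)w_{(b_2)},x_2)w_{(b_3)}$ if $(b_1,b_2,b_3)=(a_1,a_2,a_3)$, else $0$. $\pi_P,\pi_I$: projections to the quotients by the kernels; $[\mathcal{Z}]_P=\pi_P(\mathcal{Z})$; $\tilde{\mathbf{P}},\tilde{\mathbf{I}}$: induced maps on quotients. $\mathcal{F}$: a linear map from the $\mathbf{P}$-quotient to the $\mathbf{I}$-quotient sending $\pi_P(\coprod_{a_5}\mathcal{V}_{a_1a_5}^{a_4}\otimes\mathcal{V}_{a_2a_3}^{a_5})$ into $\pi_I(\coprod_{a_5}\mathcal{V}_{a_1a_2}^{a_5}\otimes\mathcal{V}_{a_5a_3}^{a_4})$;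 $\mathcal{B}$: a linear map of the $\mathbf{P}$-quotient to itself sending $\pi_P(\coprod_{a_5}\mathcal{V}_{a_1a_5}^{a_4}\otimes\mathcal{V}_{a_2a_3}^{a_5})$ into $\pi_P(\coprod_{a_5}\mathcal{V}_{a_2a_5}^{a_4}\otimes\mathcal{V}_{a_1a_3}^{a_5})$ (in the paper: fusing and braiding isomorphisms). $\mathbb{G}^{a_1,a_2,a_3,a_4}$, its fixed basis $\{e_\alpha\}_{\alpha\in\mathbb{A}(a_1,\dots,a_4)}$ and the maps $\iota_{12},\iota_{21},\iota_{20}$: with $M^2=\{z_1,z_2\ne0,z_1\ne z_2\}$, $R_1,R_2$ the regions $|z_1|>|z_2|>0$, $|z_2|>|z_1|>0$ minus points with $z_1\in[0,\infty)$ or $z_2\in[0,\infty)$, $R_3$ the region $|z_2|>|z_1-z_2|>0$ minus points with $z_2$ or $z_1-z_2\in[0,\infty)$, $R_4$ the region $|z_1|>|z_1-z_2|>0$ minus points with $z_1$ or $z_2-z_1\in[0,\infty)$: $\mathbb{G}^{a_1,\dots,a_4}$ consists of multivalued analytic functions on $M^2$ with a chosen (preferred) branch on $R_1$ whose branches on $|z_1|>|z_2|>0$, $|z_2|>|z_1|>0$, $|z_2|>|z_1-z_2|>0$ expand as $\sum_a z_1^{h_{a_4}-h_{a_1}-h_a}z_2^{h_a-h_{a_2}-h_{a_3}}F_a$, $\sum_a z_2^{h_{a_4}-h_{a_2}-h_a}z_1^{h_a-h_{a_1}-h_{a_3}}G_a$, $\sum_a z_2^{h_{a_4}-h_a-h_{a_3}}(z_1-z_2)^{h_a-h_{a_1}-h_{a_2}}H_a$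 with $F_a\in\mathbb{C}[[z_2/z_1]][z_1^{\pm1},z_2^{\pm1}]$, $G_a\in\mathbb{C}[[z_1/z_2]][z_1^{\pm1},z_2^{\pm1}]$, $H_a\in\mathbb{C}[[(z_1-z_2)/z_2]][z_2^{\pm1},(z_1-z_2)^{\pm1}]$; preferred branches on $R_3,R_4$ are continuations of the $R_1$ one through $S_1=\{\mathrm{Re}\,z_1>\mathrm{Re}\,z_2>\mathrm{Re}(z_1-z_2)>0,\mathrm{Im}\,z_1>\mathrm{Im}\,z_2>\mathrm{Im}(z_1-z_2)>0\}$, and on $R_2$ the continuation of the $R_4$ one through $S_2=\{\mathrm{Re}\,z_2>\mathrm{Re}\,z_1>\mathrm{Re}(z_2-z_1)>0,\mathrm{Im}\,z_2>\mathrm{Im}\,z_1>\mathrm{Im}(z_2-z_1)>0\}$. It is a free module over $\mathbb{C}[x_1^{\pm1},x_2^{\pm1},(x_1-x_2)^{-1}]$ with a fixed basis $e_\alpha$; $\iota_{12},\iota_{21},\iota_{20}$ give the formal expansions of the preferred branches on $R_1,R_2,R_3$ (variables $x_1,x_2$; $x_1,x_2$; $x_0=z_1-z_2,x_2$). (J) There exist linear maps $f_\alpha:W^{a_1}\otimes W^{a_2}\otimes W^{a_3}\otimes\pi_P(\coprod_{a_5}\mathcal{V}_{a_1a_5}^{a_4}\otimes\mathcal{V}_{a_2a_3}^{a_5})\to W^{a_4}[[x_2/x_1]][x_1^{\pm1},x_2^{\pm1}]$, $g_\alpha:W^{a_1}\otimes W^{a_2}\otimes W^{a_3}\otimes\pi_P(\coprod_{a_5}\mathcal{V}_{a_2a_5}^{a_4}\otimes\mathcal{V}_{a_1a_3}^{a_5})\to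 W^{a_4}[[x_1/x_2]][x_1^{\pm1},x_2^{\pm1}]$, $h_\alpha:W^{a_1}\otimes W^{a_2}\otimes W^{a_3}\otimes\pi_I(\coprod_{a_5}\mathcal{V}_{a_1a_2}^{a_5}\otimes\mathcal{V}_{a_5a_3}^{a_4})\to W^{a_4}[[x_0/x_2]][x_0^{\pm1},x_2^{\pm1}]$ such that for all $w_{(a_i)}$ and $\mathcal{Z}\in\coprod_{a_5}\mathcal{V}_{a_1a_5}^{a_4}\otimes\mathcal{V}_{a_2a_3}^{a_5}$: only finitely many of $f_\alpha(\dots,[\mathcal{Z}]_P)$, $g_\alpha(\dots,\mathcal{B}([\mathcal{Z}]_P))$, $h_\alpha(\dots,\mathcal{F}([\mathcal{Z}]_P))$ are nonzero; $(\tilde{\mathbf{P}}([\mathcal{Z}]_P))(w_{(a_1)},w_{(a_2)},w_{(a_3)};x_1,x_2)=\sum_\alpha f_\alpha(w_{(a_1)},w_{(a_2)},w_{(a_3)},[\mathcal{Z}]_P;x_1,x_2)\iota_{12}(e_\alpha)$; $(\tilde{\mathbf{P}}(\mathcal{B}([\mathcal{Z}]_P)))(w_{(a_2)},w_{(a_1)},w_{(a_3)};x_2,x_1)=\sum_\alpha g_\alpha(w_{(a_1)},w_{(a_2)},w_{(a_3)},\mathcal{B}([\mathcal{Z}]_P);x_1,x_2)\iota_{21}(e_\alpha)$; $(\tilde{\mathbf{I}}(\mathcal{F}([\mathcal{Z}]_P)))(w_{(a_1)},w_{(a_2)},w_{(a_3)};x_0,x_2)=\sum_\alpha h_\alpha(w_{(a_1)},w_{(a_2)},w_{(a_3)},\mathcal{F}([\mathcal{Z}]_P);x_0,x_2)\iota_{20}(e_\alpha)$;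 and $x_0^{-1}\delta(\frac{x_1-x_2}{x_0})f_\alpha(\dots;x_1,x_2)-x_0^{-1}\delta(\frac{x_2-x_1}{-x_0})g_\alpha(\dots;x_1,x_2)=x_2^{-1}\delta(\frac{x_1-x_0}{x_2})h_\alpha(\dots;x_0,x_2)$ for each $\alpha$. *)

(* Defs.v *)
From HB Require Import structures.
From mathcomp Require Import all_boot all_order all_algebra.
From Stdlib Require Import ClassicalEpsilon.
Set Implicit Arguments. Unset Strict Implicit. Unset Printing Implicit Defensive.
Import Order.TTheory GRing.Theory Num.Theory.
Local Open Scope ring_scope.

(* A formal series in two variables (x1,x2) or (x0,x2): coefficient of x^i y^j. *)
Definition series2 (V : Type) := int -> int -> V.
(* A formal series in (x0,x1,x2): coefficient of x0^k x1^i x2^j. *)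
Definition series3 (V : Type) := int -> int -> int -> V.

(* V[[x2/x1]][x1^{+-1},x2^{+-1}] : powers of x2 bounded below, total degree in a finite range *)
Definition in_ser12 (V : zmodType) (f : series2 V) : Prop :=
  exists N L M : int, forall i j, f i j <> 0 -> N <= j /\ L <= i + j <= M.
(* V[[x1/x2]][x1^{+-1},x2^{+-1}] *)
Definition in_ser21 (V : zmodType) (g : series2 V) : Prop :=
  exists N L M : int, forall i j, g i j <> 0 -> N <= i /\ L <= i + j <= M.
(* V[[x0/x2]][x0^{+-1},x2^{+-1}] (first index: power of x0, second: power of x2) *)
Definition in_ser20 (V : zmodType) (h : series2 V) : Prop :=
  exists N L M : int, forall k j, h k j <> 0 -> N <= k /\ L <= k + j <= M.

(* generalized binomial coefficient binom(n, m) for n : int, m : nat *)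
Definition zbinom (n : int) (m : nat) : int :=
  match n with
  | Posz k => ('C(k, m))%:Z
  | Negz k => (-1) ^+ m * ('C(k + m, m))%:Z
  end.

(* sum of a finitely supported family indexed by nat (0 if not finitely supported) *)
Definition fsum (V : zmodType) (u : nat -> V) : V :=
  match excluded_middle_informative (exists K : nat, forall m, (K <= m)%N -> u m = 0) with
  | left H => \sum_(m < proj1_sig (constructive_indefinite_description _ H)) u m
  | right _ => 0
  end.

(* coefficient of x0^k x1^i x2^j in x0^{-1} delta((x1-x2)/x0) f(x1,x2) *)
Definition jac1 (V : zmodType) (f : series2 V) : series3 V := fun k i j =>
  let n := - k - 1 in
  fsum (fun m : nat => f (i - n + m%:Z) (j - m%:Z) *~ (zbinom n m * (-1) ^+ m)).

(* coefficient of x0^k x1^i x2^j in x0^{-1} delta((x2-x1)/(-x0)) g(x1,x2) *)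
Definition jac2 (V : zmodType) (g : series2 V) : series3 V := fun k i j =>
  let n := - k - 1 in
  fsum (fun m : nat =>
    g (i - m%:Z) (j - n + m%:Z) *~ ((-1) ^+ `|n|%N * zbinom n m * (-1) ^+ m)).

(* coefficient of x0^k x1^i x2^j in x2^{-1} delta((x1-x0)/x2) h(x0,x2) *)
Definition jac3 (V : zmodType) (h : series2 V) : series3 V := fun k i j =>
  fsum (fun m : nat =>
    h (k - m%:Z) (j + i + m%:Z + 1) *~ (zbinom (i + m%:Z) m * (-1) ^+ m)).

(* the Jacobi identity
   x0^{-1}d((x1-x2)/x0) f(x1,x2) - x0^{-1}d((x2-x1)/(-x0)) g(x1,x2)
     = x2^{-1}d((x1-x0)/x2) h(x0,x2) *)
Definition jacobi (V : zmodType) (f g h : series2 V) : Prop :=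
  forall k i j, jac1 f k i j - jac2 g k i j = jac3 h k i j.

Definition mul_x1mx2 (V : zmodType) (n : nat) (F : series2 V) : series2 V := fun i j =>
  \sum_(m < n.+1) F (i - n%:Z + m%:Z) (j - m%:Z) *~ (('C(n, m))%:Z * (-1) ^+ m).

Definition mul_x0px2 (V : zmodType) (n : nat) (F : series2 V) : series2 V := fun p q =>
  \sum_(m < n.+1) F (p - n%:Z + m%:Z) (q - m%:Z) *~ ('C(n, m))%:Z.

(* F(x0 + x2, x2), (x0+x2)^i expanded in nonnegative powers of x2 *)
Definition subst_x0px2 (V : zmodType) (F : series2 V) : series2 V := fun p q =>
  fsum (fun m : nat => F (p + m%:Z) (q - m%:Z) *~ zbinom (p + m%:Z) m).

Definition pair2 (K : fieldType) (V : lmodType K) (w' : V -> K) (F : series2 V)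
  : series2 K := fun i j => w' (F i j).

(* Main.v *)
Require Import Defs.
From HB Require Import structures.
From mathcomp Require Import all_boot all_order all_algebra zify ring.
From Stdlib Require Import ClassicalEpsilon FunctionalExtensionality.
Set Implicit Arguments. Unset Strict Implicit. Unset Printing Implicit Defensive.
Import Order.TTheory GRing.Theory Num.Theory.
Local Open Scope ring_scope.

Lemma sum_ext0 (V : zmodType) (u : nat -> V) K K' : (K <= K')%N ->
  (forall m, (K <= m)%N -> u m = 0) -> \sum_(m < K') u m = \sum_(m < K) u m.
Proof.
move=> HK H; rewrite -!(big_mkord xpredT) (big_cat_nat (n:=K)) //=.
rewrite [X in _ + X]big1_seq ?addr0 // => m.
by rewrite mem_index_iota => /andP[_ /andP[Hm _]]; apply: H.
Qed.

Lemma fsumE (V : zmodType) (u : nat -> V) K :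
  (forall m, (K <= m)%N -> u m = 0) -> fsum u = \sum_(m < K) u m.
Proof.
move=> H; rewrite /fsum; case: excluded_middle_informative => [H1|H1]; last first.
  by exfalso; apply: H1; exists K.
case: (constructive_indefinite_description _ H1) => K0 /= HK0.
rewrite -(@sum_ext0 _ u K (maxn K K0)) ?leq_maxl //.
by rewrite -(@sum_ext0 _ u K0 (maxn K K0)) ?leq_maxr.
Qed.

Lemma pascal_sum (V : zmodType) (B : nat -> V) (d e s : nat -> int) K :
  (forall m, d m.+1 = e m.+1 + s m) -> d 0%N = e 0%N -> B K.+1 *~ s K = 0 ->
  \sum_(m < K.+1) B m *~ d m =
  \sum_(m < K.+1) B m *~ e m + \sum_(m < K.+1) B m.+1 *~ s m.
Proof.
move=> Hd H0 HK.
rewrite big_ord_recl [X in _ = X + _]big_ord_recl [X in _ = _ + X]big_ord_recr /=.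
rewrite HK addr0 H0 -addrA; congr (_ + _).
rewrite -big_split /=; apply: eq_bigr => i _.
by rewrite Hd mulrzDr.
Qed.

Lemma zbinomS (n : int) (m : nat) :
  zbinom (n + 1) m.+1 = zbinom n m.+1 + zbinom n m.
Proof.
case: n => [k|k].
  have -> : Posz k + 1 = Posz k.+1 by lia.
  by rewrite /= binS PoszD.
case: k => [|k].
  have -> : Negz 0 + 1 = Posz 0 by [].
  rewrite /= bin0n /= !add0n !binn exprS; ring.
have -> : Negz k.+1 + 1 = Negz k by lia.
rewrite /=.
have -> : (k.+1 + m.+1 = (k + m.+1).+1)%N by lia.
have -> : (k.+1 + m = k + m.+1)%N by lia.
rewrite binS PoszD exprS; ring.
Qed.

Lemma zbinom0 n : zbinom n 0 = 1.
Proof. by case: n => k /=; rewrite bin0 ?expr0 ?mul1r. Qed.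

Lemma sign2 (m : nat) : (-1) ^+ m * (-1) ^+ m = 1 :> int.
Proof. by rewrite -expr2 sqrr_sign. Qed.

Lemma ser12_zero (V : zmodType) (f : series2 V) : in_ser12 f ->
  exists N, forall a b, b < N -> f a b = 0.
Proof.
case=> N [L [M H]]; exists N => a b Hb; apply/eqP; apply: contraT => /eqP Hn.
by case: (H _ _ Hn) => HN _; move: Hb; rewrite ltNge HN.
Qed.

Lemma ser21_zero (V : zmodType) (f : series2 V) : in_ser21 f ->
  exists N, forall a b, a < N -> f a b = 0.
Proof.
case=> N [L [M H]]; exists N => a b Hb; apply/eqP; apply: contraT => /eqP Hn.
by case: (H _ _ Hn) => HN _; move: Hb; rewrite ltNge HN.
Qed.

Lemma ser20_zero (V : zmodType) (f : series2 V) : in_ser20 f ->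
  exists N, forall a b, a < N -> f a b = 0.
Proof.
case=> N [L [M H]]; exists N => a b Hb; apply/eqP; apply: contraT => /eqP Hn.
by case: (H _ _ Hn) => HN _; move: Hb; rewrite ltNge HN.
Qed.

Lemma bnd (j N : int) (m : nat) : (`|j - N|%N.+1 <= m)%N -> j - m%:Z < N.
Proof. move=> H. have := ler_norm (j - N). rewrite -abszE. lia. Qed.

Lemma jac1_rec (V : zmodType) (f : series2 V) N
  (Hf : forall a b, b < N -> f a b = 0) k i j :
  jac1 f k (i - 1) j = jac1 f (k - 1) i j + jac1 f k i (j - 1).
Proof.
set K := `|j - N|%N.+1.
have Z : forall a m, (K <= m)%N -> f a (j - m%:Z) = 0 by move=> a m Hm; apply: Hf; apply: bnd.
rewrite /jac1 /= !(@fsumE _ _ K.+1); last first.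
all: try (move=> m Hm; rewrite Hf ?mul0rz //; have := bnd (ltnW Hm); lia).
have -> : - (k - 1) - 1 = (- k - 1) + 1 by lia.
set n := - k - 1.
rewrite (@pascal_sum _ (fun m : nat => f (i - 1 - n + m%:Z) (j - m%:Z))
   (fun m => zbinom n m * (-1) ^+ m) (fun m => zbinom (n + 1) m * (-1) ^+ m)
   (fun m => zbinom n m * (-1) ^+ m)) /=.
- congr (_ + _); apply: eq_bigr => m _; congr (f _ _ *~ _); lia.
- by move=> m; rewrite zbinomS exprS; ring.
- by rewrite !zbinom0.
- by rewrite Z ?mul0rz.
Qed.

Lemma zbinom_neg (p : int) (m : nat) :
  zbinom (- p - 1) m * (-1) ^+ m = zbinom (p + m%:Z) m.
Proof.
case: p => [a|a].
  have -> : - Posz a - 1 = Negz a by lia.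
  have -> : Posz a + m%:Z = Posz (a + m) by lia.
  by rewrite /= mulrC mulrA sign2 mul1r.
have -> : - Negz a - 1 = Posz a by lia.
case: (leqP m a) => Hm.
  have -> : Negz a + m%:Z = Negz (a - m) by lia.
  by rewrite /= subnK // mulrC.
have -> : Negz a + m%:Z = Posz (m - a.+1) by lia.
by rewrite /= !bin_small ?mul0r //; lia.
Qed.

Lemma mul0_rec (V : zmodType) (F : series2 V) n p q :
  mul_x0px2 n.+1 F p q = mul_x0px2 n F (p - 1) q + mul_x0px2 n F p (q - 1).
Proof.
rewrite /mul_x0px2.
rewrite (@pascal_sum _ (fun m : nat => F (p - n.+1%:Z + m%:Z) (q - m%:Z))
   (fun m => ('C(n.+1, m))%:Z) (fun m => ('C(n, m))%:Z) (fun m => ('C(n, m))%:Z)) /=.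
- rewrite [X in X + _ = _]big_ord_recr [X in _ + X = _]big_ord_recr /=.
  rewrite bin_small // !mulr0z !addr0; congr (_ + _); apply: eq_bigr => m _;
  congr (F _ _ *~ _); lia.
- by move=> m; rewrite binS PoszD.
- by rewrite !bin0.
- by rewrite bin_small ?mulr0z.
Qed.

Lemma subst_jac1 (V : zmodType) (f : series2 V) p q :
  jac1 f p (-1) q = subst_x0px2 f p q.
Proof.
rewrite /jac1 /subst_x0px2 /=; congr fsum; apply: functional_extensionality => m.
rewrite zbinom_neg; congr (f _ _ *~ _); lia.
Qed.

Lemma assoc_f (V : zmodType) (f : series2 V) N
  (Hf : forall a b, b < N -> f a b = 0) n p q :
  jac1 f p (- (n%:Z) - 1) q = mul_x0px2 n (subst_x0px2 f) p q.
Proof.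
elim: n p q => [|n IH] p q.
  rewrite subst_jac1 /mul_x0px2 big_ord1 /= bin0 mulr1z; congr (subst_x0px2 f _ _); lia.
have -> : - (n.+1%:Z) - 1 = (- (n%:Z) - 1) - 1 by lia.
by rewrite (jac1_rec Hf) !IH mul0_rec.
Qed.

Lemma assoc_h (V : zmodType) (h : series2 V) n p q :
  jac3 h p (- (n%:Z) - 1) q = mul_x0px2 n h p q.
Proof.
rewrite /jac3 /mul_x0px2 (@fsumE _ _ n.+1); last first.
  move=> m Hm; have -> : - (n%:Z) - 1 + m%:Z = Posz (m - n.+1) by lia.
  by rewrite /= bin_small ?mul0r ?mulr0z //; lia.
rewrite (reindex_inj rev_ord_inj) /=; apply: eq_bigr => m _.
have Hm := ltn_ord m.
have -> : - (n%:Z) - 1 + (n.+1 - m.+1)%N%:Z = Negz m by lia.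
rewrite /=.
have -> : (n.+1 - m.+1 = n - m)%N by lia.
have -> : (m + (n - m) = n)%N by lia.
rewrite mulrAC sign2 mul1r bin_sub; last lia.
congr (h _ _ *~ _); lia.
Qed.

Lemma jac2_zero (V : zmodType) (g : series2 V) N
  (Hg : forall a b, a < N -> g a b = 0) p q :
  jac2 g p (- (`|N|%N%:Z) - 1) q = 0.
Proof.
rewrite /jac2 (@fsumE _ _ 0) ?big_ord0 // => m _.
by rewrite Hg ?mul0rz //; lia.
Qed.

Lemma jac3_zero (V : zmodType) (h : series2 V) N
  (Hh : forall a b, a < N -> h a b = 0) i j :
  jac3 h (- (`|N|%N%:Z) - 1) i j = 0.
Proof.
rewrite /jac3 (@fsumE _ _ 0) ?big_ord0 // => m _.
by rewrite Hh ?mul0rz //; lia.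
Qed.

Lemma loc_f (V : zmodType) (f : series2 V) n i j :
  jac1 f (- (n%:Z) - 1) i j = mul_x1mx2 n f i j.
Proof.
rewrite /jac1 /=.
have -> : - (- (n%:Z) - 1) - 1 = n%:Z by lia.
rewrite (@fsumE _ _ n.+1); last first.
  by move=> m Hm; rewrite /= bin_small ?mul0r ?mulr0z.
by apply: eq_bigr => m _; congr (f _ _ *~ _); lia.
Qed.

Lemma loc_g (V : zmodType) (g : series2 V) n i j :
  jac2 g (- (n%:Z) - 1) i j = mul_x1mx2 n g i j.
Proof.
rewrite /jac2 /=.
have -> : - (- (n%:Z) - 1) - 1 = n%:Z by lia.
rewrite (@fsumE _ _ n.+1); last first.
  by move=> m Hm; rewrite /zbinom bin_small // (_ : Posz 0 = 0) // mulr0 mul0r mulr0z.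
rewrite /mul_x1mx2 (reindex_inj rev_ord_inj) /=; apply: eq_bigr => m _.
have Hm := ltn_ord m.
have -> : (n.+1 - m.+1 = n - m)%N by lia.
rewrite bin_sub; last lia.
have E : (-1) ^+ n = (-1) ^+ (n - m) * (-1) ^+ m :> int by rewrite -exprD subnK //; lia.
rewrite /zbinom /= E.
congr (g _ _ *~ _); try lia.
transitivity (((-1)^+(n-m) * (-1)^+(n-m)) * ('C(n,m)%:Z * (-1)^+m)); first ring.
by rewrite sign2 mul1r.
Qed.

Lemma main_V (V : zmodType) (f g h : series2 V) :
  in_ser12 f -> in_ser21 g -> in_ser20 h -> jacobi f g h ->
  (exists n1, forall i j, mul_x1mx2 n1 f i j = mul_x1mx2 n1 g i j) /\
  (exists n2, forall p q, mul_x0px2 n2 (subst_x0px2 f) p q = mul_x0px2 n2 h p q).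
Proof.
move=> /ser12_zero [Nf Hf] /ser21_zero [Ng Hg] /ser20_zero [Nh Hh] J; split.
  exists `|Nh|%N => i j; have := J (- (`|Nh|%N%:Z) - 1) i j.
  by rewrite loc_f loc_g (jac3_zero Hh) => /eqP; rewrite subr_eq0 => /eqP.
exists `|Ng|%N => p q; have := J p (- (`|Ng|%N%:Z) - 1) q.
by rewrite (assoc_f Hf) assoc_h (jac2_zero Hg) subr0.
Qed.

Section Pair.
Variables (K : fieldType) (V : lmodType K) (w' : V -> K).
Hypothesis lin : forall (c : K) (u v : V), w' (c *: u + v) = c * w' u + w' v.

Lemma w0 : w' 0 = 0.
Proof.
have := lin 1 0 0; rewrite scale1r addr0 mul1r => H.
by apply: (@addrI _ (w' 0)); rewrite addr0 -H.
Qed.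

Lemma wD : {morph w' : x y / x + y}.
Proof. by move=> x y; rewrite -(scale1r x) lin mul1r scale1r. Qed.

Lemma wZ (x : V) (z : int) : w' (x *~ z) = w' x *~ z.
Proof. by rewrite -scaler_int -(addr0 (_ *: _)) lin w0 addr0 mulrzl. Qed.

Lemma wsum n (F : nat -> V) : w' (\sum_(m < n) F m) = \sum_(m < n) w' (F m).
Proof. exact: (big_morph w' wD w0). Qed.

Lemma pair_mul1 n F : mul_x1mx2 n (pair2 w' F) = pair2 w' (mul_x1mx2 n F).
Proof.
apply: functional_extensionality => i; apply: functional_extensionality => j.
by rewrite /pair2 /mul_x1mx2 (big_morph w' wD w0); apply: eq_bigr => m _; rewrite wZ.
Qed.

Lemma pair_mul0 n F : mul_x0px2 n (pair2 w' F) = pair2 w' (mul_x0px2 n F).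
Proof.
apply: functional_extensionality => i; apply: functional_extensionality => j.
by rewrite /pair2 /mul_x0px2 (big_morph w' wD w0); apply: eq_bigr => m _; rewrite wZ.
Qed.
End Pair.

Theorem theorem3p4 (K : fieldType) (A : finType) (W : A -> lmodType K)
  (QP QI : A -> A -> A -> A -> Type)
  (Alpha : A -> A -> A -> A -> Type)
  (Fus : forall a1 a2 a3 a4, QP a1 a2 a3 a4 -> QI a1 a2 a3 a4)
  (Br : forall a1 a2 a3 a4, QP a1 a2 a3 a4 -> QP a2 a1 a3 a4)
  (f : forall a1 a2 a3 a4, Alpha a1 a2 a3 a4 ->
         W a1 -> W a2 -> W a3 -> QP a1 a2 a3 a4 -> series2 (W a4))
  (g : forall a1 a2 a3 a4, Alpha a1 a2 a3 a4 ->
         W a1 -> W a2 -> W a3 -> QP a2 a1 a3 a4 -> series2 (W a4))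
  (h : forall a1 a2 a3 a4, Alpha a1 a2 a3 a4 ->
         W a1 -> W a2 -> W a3 -> QI a1 a2 a3 a4 -> series2 (W a4))
  (f_supp : forall a1 a2 a3 a4 al w1 w2 w3 z,
      in_ser12 (@f a1 a2 a3 a4 al w1 w2 w3 z))
  (g_supp : forall a1 a2 a3 a4 al w1 w2 w3 z,
      in_ser21 (@g a1 a2 a3 a4 al w1 w2 w3 z))
  (h_supp : forall a1 a2 a3 a4 al w1 w2 w3 z,
      in_ser20 (@h a1 a2 a3 a4 al w1 w2 w3 z))
  (fin_f : forall a1 a2 a3 a4 w1 w2 w3 (z : QP a1 a2 a3 a4), exists s : seq (Alpha a1 a2 a3 a4),
      forall al, @f a1 a2 a3 a4 al w1 w2 w3 z <> (fun _ _ => 0) -> List.In al s)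
  (fin_g : forall a1 a2 a3 a4 w1 w2 w3 (z : QP a1 a2 a3 a4), exists s : seq (Alpha a1 a2 a3 a4),
      forall al, @g a1 a2 a3 a4 al w1 w2 w3 (@Br a1 a2 a3 a4 z) <> (fun _ _ => 0) -> List.In al s)
  (fin_h : forall a1 a2 a3 a4 w1 w2 w3 (z : QP a1 a2 a3 a4), exists s : seq (Alpha a1 a2 a3 a4),
      forall al, @h a1 a2 a3 a4 al w1 w2 w3 (@Fus a1 a2 a3 a4 z) <> (fun _ _ => 0) -> List.In al s)
  (J : forall a1 a2 a3 a4 al w1 w2 w3 (z : QP a1 a2 a3 a4),
      jacobi (@f a1 a2 a3 a4 al w1 w2 w3 z)
             (@g a1 a2 a3 a4 al w1 w2 w3 (@Br a1 a2 a3 a4 z))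
             (@h a1 a2 a3 a4 al w1 w2 w3 (@Fus a1 a2 a3 a4 z))) :
  forall (a1 a2 a3 a4 : A) (w1 : W a1) (w2 : W a2) (w3 : W a3)
         (w' : W a4 -> K),
    (forall (c : K) (u v : W a4), w' (c *: u + v) = c * w' u + w' v) ->
  forall (z : QP a1 a2 a3 a4) (al : Alpha a1 a2 a3 a4),
  exists n1 n2 : nat,
    mul_x1mx2 n1 (pair2 w' (@f a1 a2 a3 a4 al w1 w2 w3 z))
      = mul_x1mx2 n1 (pair2 w' (@g a1 a2 a3 a4 al w1 w2 w3 (@Br a1 a2 a3 a4 z)))
    /\ mul_x0px2 n2 (pair2 w' (subst_x0px2 (@f a1 a2 a3 a4 al w1 w2 w3 z)))
      = mul_x0px2 n2 (pair2 w' (@h a1 a2 a3 a4 al w1 w2 w3 (@Fus a1 a2 a3 a4 z))).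
Proof.
move=> a1 a2 a3 a4 w1 w2 w3 w' lin z al.
have [[n1 H1] [n2 H2]] := main_V (f_supp a1 a2 a3 a4 al w1 w2 w3 z)
  (g_supp a1 a2 a3 a4 al w1 w2 w3 (@Br a1 a2 a3 a4 z))
  (h_supp a1 a2 a3 a4 al w1 w2 w3 (@Fus a1 a2 a3 a4 z)) (J a1 a2 a3 a4 al w1 w2 w3 z).
exists n1, n2; split.
- rewrite !(pair_mul1 lin); congr (pair2 w' _).
  by apply: functional_extensionality => i; apply: functional_extensionality => j.
- rewrite !(pair_mul0 lin); congr (pair2 w' _).
  by apply: functional_extensionality => i; apply: functional_extensionality => j.
Qed.
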